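(* A function $f\colon\prod_{i\in[n]}X_i\to Y$ is a pseudo-polynomial function if and only if it is pseudo-median decomposable.
   Context: $Y$ is a finite distributive lattice with least element $0$ and greatest element $1$. $[n]=\{1,\ldots,n\}$. $X_1,\ldots,X_n$ are arbitrary sets with at least two elements; in each $X_k$ two distinct elements $0_{X_k},1_{X_k}$ (written $0,1$) are fixed. A map $\varphi_k\colon X_k\to Y$ satisfies the boundary condition if $\varphi_k(0_{X_k})\le\varphi_k(x_k)\le\varphi_k(1_{X_k})$ for all $x_k\in X_k$. A polynomial function $p\colon Y^n\to Y$ is a function obtained by composing the lattice operations $\wedge,\vee$ with variables and constants of $Y$. $f$ is a pseudo-polynomial function if there exist a polynomial function $p\colon Y^n\to Y$ and maps $\varphi_k\colon X_k\to Y$ satisfying the boundary condition with $f(\mathbf{x})=p(\varphi_1(x_1),\ldots,\varphi_n(x_n))$ for all $\mathbf{x}$. For $\mathbf{x}$ and $a\in X_k$, $\mathbf{x}_k^a$ is $\mathbf{x}$ with its $k$-th component replaced by $a$. $\operatorname{med}(y_1,y_2,y_3)=(y_1\wedge y_2)\vee(y_2\wedge y_3)\vee(y_3\wedge y_1)$. $f$ is pseudo-median decomposable if for each $k\in[n]$ there is a map $\varphi_k\colon X_k\to Y$ satisfying the boundary condition such that $f(\mathbf{x})=\operatorname{med}\big(f(\mathbf{x}_k^0),\varphi_k(x_k),f(\mathbf{x}_k^1)\big)$ for every $\mathbf{x}\in\prod_{i\in[n]}X_i$. *)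

(* Defs.v *)
From HB Require Import structures.
From mathcomp Require Import all_boot all_order.
Set Implicit Arguments. Unset Strict Implicit. Unset Printing Implicit Defensive.
Import Order.Theory.
Local Open Scope order_scope.

Inductive lpoly (Y : Type) (n : nat) : Type :=
  | LVar of 'I_n
  | LCst of Y
  | LMeet of lpoly Y n & lpoly Y n
  | LJoin of lpoly Y n & lpoly Y n.

Section Defs.
Context {d : Order.disp_t} {Y : finTBDistrLatticeType d} {n : nat}.

Fixpoint lpeval (t : lpoly Y n) (y : 'I_n -> Y) : Y :=
  match t with
  | LVar i => y i
  | LCst c => c
  | LMeet t1 t2 => lpeval t1 y `&` lpeval t2 y
  | LJoin t1 t2 => lpeval t1 y `|` lpeval t2 y
  end.

Definition is_polynomial_function (p : ('I_n -> Y) -> Y) : Prop :=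
  exists t : lpoly Y n, forall y, p y = lpeval t y.

Definition med (y1 y2 y3 : Y) : Y :=
  (y1 `&` y2) `|` (y2 `&` y3) `|` (y3 `&` y1).

Variables (X : 'I_n -> Type) (x0 x1 : forall k, X k).

Definition boundary_cond (k : 'I_n) (phi : X k -> Y) : Prop :=
  forall a : X k, phi (x0 k) <= phi a <= phi (x1 k).

Definition pseudo_polynomial (f : (forall k, X k) -> Y) : Prop :=
  exists (p : ('I_n -> Y) -> Y) (phi : forall k, X k -> Y),
    is_polynomial_function p /\ (forall k, boundary_cond (phi k)) /\
    forall x : forall k, X k, f x = p (fun i => phi i (x i)).

Definition upd (x : forall k, X k) (k : 'I_n) (a : X k) : forall i, X i :=
  dfwith x a.

Definition pseudo_median_decomposable (f : (forall k, X k) -> Y) : Prop :=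
  forall k : 'I_n, exists phi : X k -> Y, boundary_cond phi /\
    forall x : forall i, X i,
      f x = med (f (upd x (x0 k))) (phi (x k)) (f (upd x (x1 k))).
End Defs.

(* Main.v *)
Require Import Defs.
From HB Require Import structures.
From mathcomp Require Import all_boot all_order.
From Stdlib Require Import FunctionalExtensionality ClassicalEpsilon.
Set Implicit Arguments. Unset Strict Implicit. Unset Printing Implicit Defensive.
Import Order.Theory.
Local Open Scope order_scope.

Ltac lat n := match n with 0 => fail | S ?m =>
  rewrite ?leUx ?lexI; repeat (apply/andP; split);
  first [exact: lexx | assumption | (apply: leIxl; lat m) | (apply: leIxr; lat m)
        | (apply: lexUl; lat m) | (apply: lexUr; lat m)] end.

Section L.
Context {d : Order.disp_t} {Y : finTBDistrLatticeType d} {n : nat}.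

Lemma meet_case (A1 A2 B1 B2 c : Y) : A1 <= B1 -> A2 <= B2 ->
  (A1 `|` (c `&` B1)) `&` (A2 `|` (c `&` B2)) = (A1 `&` A2) `|` (c `&` (B1 `&` B2)).
Proof.
move=> h1 h2; apply: le_anti; apply/andP; split; last by lat 6.
rewrite meetUl !meetUr; lat 6.
Qed.

Lemma join_case (A1 A2 B1 B2 c : Y) :
  (A1 `|` (c `&` B1)) `|` (A2 `|` (c `&` B2)) = (A1 `|` A2) `|` (c `&` (B1 `|` B2)).
Proof.
apply: le_anti; apply/andP; split; first by lat 6.
rewrite meetUr; lat 6.
Qed.

Lemma med_le (A B c : Y) : A <= B -> med A c B = A `|` (c `&` B).
Proof.
move=> h; rewrite /med; apply: le_anti; apply/andP; split; lat 6.
Qed.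

Definition yk (y : 'I_n -> Y) k c := fun i => if i == k then c else y i.

Lemma lp_mono (t : lpoly Y n) y z : (forall i, y i <= z i) -> lpeval t y <= lpeval t z.
Proof.
move=> h; elim: t => /= [i|c|t1 IH1 t2 IH2|t1 IH1 t2 IH2] //.
- exact: leI2.
- exact: leU2.
Qed.

Lemma lp_yk (t : lpoly Y n) y k a b c : a <= c -> c <= b ->
  lpeval t (yk y k c) = lpeval t (yk y k a) `|` (c `&` lpeval t (yk y k b)).
Proof.
move=> hac hcb.
have hab : a <= b by exact: le_trans hcb.
have mono : forall t', lpeval t' (yk y k a) <= lpeval t' (yk y k b).
  by move=> t'; apply: lp_mono => j; rewrite /yk; case: eqP.
elim: t => /= [i|e|t1 IH1 t2 IH2|t1 IH1 t2 IH2].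
- rewrite /yk; case: eqP => _; first by rewrite (meet_l hcb) (join_r hac).
  by rewrite meetC meetKU.
- by rewrite meetC meetKU.
- by rewrite IH1 IH2 meet_case.
- by rewrite IH1 IH2 join_case.
Qed.
End L.

Section R.
Context {d : Order.disp_t} {Y : finTBDistrLatticeType d} {n : nat}.
Variables (X : 'I_n -> Type) (x0 x1 : forall k, X k) (f : (forall k, X k) -> Y).

Fixpoint T (ks : seq 'I_n) (x : forall k, X k) : lpoly Y n :=
  match ks with
  | [::] => LCst n (f x)
  | k :: ks' =>
    let A := T ks' (upd x (x0 k)) in
    let B := T ks' (upd x (x1 k)) in
    LJoin (LJoin (LMeet A (LVar Y k)) (LMeet (LVar Y k) B)) (LMeet B A)
  end.

Lemma T_spec (phi : forall k, X k -> Y)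
  (Hphi : forall k x, f x = med (f (upd x (x0 k))) (phi k (x k)) (f (upd x (x1 k)))) :
  forall ks, uniq ks -> forall x x', (forall i, i \notin ks -> x' i = x i) ->
  forall y, (forall i, i \in ks -> y i = phi i (x' i)) -> f x' = lpeval (T ks x) y.
Proof.
elim=> [|k ks IH] /=.
- move=> _ x x' hx y _.
  have -> : x' = x by apply: functional_extensionality_dep => i; exact: hx.
  by [].
- move=> /andP [kks uks] x x' hx y hy.
  rewrite (Hphi k x') /med.
  have side1 : forall a : X k, forall i, i \notin ks -> upd x' a i = upd x a i.
    move=> a i ik; rewrite /upd; case: (eqVneq k i) => [<-|ki].
      by rewrite !dfwith_in.
    by rewrite !dfwith_out // hx // in_cons negb_or ik eq_sym ki.
  have side2 : forall a : X k, forall i, i \in ks -> y i = phi i (upd x' a i).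
    move=> a i ik; rewrite hy ?in_cons ?ik ?orbT // /upd dfwith_out //.
    by apply/eqP => ki; move: kks; rewrite ki ik.
  rewrite -(IH uks _ _ (side1 _) y (side2 _)) -(IH uks _ _ (side1 _) y (side2 _)).
  by rewrite (hy k (mem_head _ _)).
Qed.
End R.

Theorem mainTheorem2 (d : Order.disp_t) (Y : finTBDistrLatticeType d) (n : nat)
  (X : 'I_n -> Type) (x0 x1 : forall k, X k) (hx01 : forall k, x0 k <> x1 k)
  (f : (forall k, X k) -> Y) :
  pseudo_polynomial x0 x1 f <-> pseudo_median_decomposable x0 x1 f.
Proof.
split.
- move=> [p [phi [[t ht] [hb hf]]]] k; exists (phi k); split; first exact: hb.
  move=> x; set y := fun i => phi i (x i).
  have E : forall a, (fun i => phi i (upd x a i)) = yk y k (phi k a).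
    move=> a; apply: functional_extensionality => i; rewrite /yk /upd.
    case: (eqVneq i k) => [->|ik]; first by rewrite dfwith_in.
    by rewrite dfwith_out // eq_sym.
  have Ey : y = yk y k (phi k (x k)).
    apply: functional_extensionality => i; rewrite /yk.
    by case: (eqVneq i k) => [->|].
  rewrite !hf !ht !E -/y.
  have [h0 h1] := andP (hb k (x k)).
  rewrite med_le; last by apply: lp_mono => j; rewrite /yk; case: eqP => // _; exact: le_trans h1.
  by rewrite {1}Ey (lp_yk _ _ _ h0 h1).
- move=> H.
  pose phi := fun k => proj1_sig (constructive_indefinite_description _ (H k)).
  have Hphi : forall k, boundary_cond x0 x1 (phi k) /\
     forall x, f x = med (f (upd x (x0 k))) (phi k (x k)) (f (upd x (x1 k))).
    by move=> k; exact: (proj2_sig (constructive_indefinite_description _ (H k))).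
  exists (lpeval (T x0 x1 f (enum 'I_n) x0)), phi; split; first by eexists.
  split; first by move=> k; case: (Hphi k).
  move=> x'; apply: (T_spec (phi := phi)) => //.
  + by move=> k x; case: (Hphi k) => _ ->.
  + exact: enum_uniq.
  + by move=> i; rewrite mem_enum.
Qed.
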